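(* Assume $d'=1$ and $t\ge2$, and let $n,j\in[t]$ with $n\neq j$. For each $k_3\in[d]$ define the slice $M^{(k_3)}_{n,j}=\big(\tilde T_{(k_1,n),(k_2,n),(k_3,j)}\big)_{k_1,k_2\in[d]}$ where $\tilde T_{(k_1,n),(k_2,n),(k_3,j)}=y_{n,j}(\{k_1,k_2\},k_3)$. Then: (1) on the image of $\mu$, for fixed $j$ and $k_3$, $M^{(k_3)}_{n,j}=M^{(k_3)}_{n',j}$ for all $n,n'\ne j$; (2) on the image of $\mu$, every matrix $M(\lambda)=\sum_{k=1}^d\lambda_kM^{(k)}_{n,j}$, $\lambda\in\mathbb R^d$, has rank at most $2$; (3) for any row set $R=\{r_1,r_2,r_3\}\subseteq[d]$, column set $C=\{c_1,c_2,c_3\}\subseteq[d]$ and multiset $S\in\operatorname{Mult}_3([d])$, the cubic polynomial \[ \Delta^S_{R,C}=\sum_{(t_1,t_2,t_3)\in\operatorname{Perm}(S)}\det\big(\tilde T_{(r_p,n),(c_q,n),(t_p,j)}\big)_{p,q=1}^3 \] vanishes on the attention variety. (These are the coefficients of $\lambda_{s_1}\lambda_{s_2}\lambda_{s_3}$ in the $(R,C)$ $3\times3$ minor of $M(\lambda)$, indexed by $\binom d3^2\binom{d+2}3$ triples $(R,C,S)$.)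
   Context: Setup: $Q,K\in\mathbb R^{a\times d}$, $V\in\mathbb R^{1\times d}$, $A=K^\top Q$, $\varphi_W(X)=VX(X^\top AX)$ for $X=(x_{kn})\in\mathbb R^{d\times t}$. For $\mathcal A$ a size-2 multiset on $[d]$, $b\in[d]$, $n\ne j$: $c_{n,j}(\mathcal A,b)$ is the coefficient of $(\prod_{u\in\mathcal A}x_{un})x_{bj}$ in $\varphi_W(X)[1,j]$, and $y_{n,j}(\mathcal A,b)=c_{n,j}(\mathcal A,b)/|\operatorname{Perm}(\mathcal A)|$ with $\operatorname{Perm}$ the set of distinct orderings of a multiset. $\mu$ maps $W=(Q,K,V)$ to the array of all scaled coefficients (ambient coordinates carry the same names); the attention variety is the Zariski closure of $\operatorname{im}\mu$. $\operatorname{Mult}_3([d])$ is the set of size-3 multisets on $[d]$. *)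

(* Defs.v *)
From HB Require Import structures.
From mathcomp Require Import all_boot all_order all_algebra.
From mathcomp Require Import mpoly.
Set Implicit Arguments.
Unset Strict Implicit.
Unset Printing Implicit Defensive.
Import Order.TTheory GRing.Theory Num.Theory.
Local Open Scope ring_scope.

(* Multisets of size k on [d] = 'I_d, represented canonically as     *)
(* nondecreasing k-tuples.                                          *)
Definition is_mset (k d : nat) (s : k.-tuple 'I_d) : bool :=
  sorted (fun x y : 'I_d => (x <= y)%N) s.

Record mset (k d : nat) := MSet { mtup :> k.-tuple 'I_d; _ : is_mset mtup }.

HB.instance Definition _ k d := [isSub for @mtup k d].
HB.instance Definition _ k d := [Finite of mset k d by <:].

Notation Mult k d := (mset k d).

Lemma msort_size (k d : nat) (s : k.-tuple 'I_d) :
  size (sort (fun x y : 'I_d => (x <= y)%N) s) == k.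
Proof. by rewrite size_sort size_tuple. Qed.

Lemma msort_sorted (k d : nat) (s : k.-tuple 'I_d) :
  is_mset (Tuple (msort_size s)).
Proof.
rewrite /is_mset /=; apply: sort_sorted => x y; exact: leq_total.
Qed.

Definition msort (k d : nat) (s : k.-tuple 'I_d) : mset k d :=
  MSet (msort_sorted s).

Definition mset2 (d : nat) (k1 k2 : 'I_d) : mset 2 d := msort [tuple k1; k2].

Definition Perm (k d : nat) (S : mset k d) : {set k.-tuple 'I_d} :=
  [set s : k.-tuple 'I_d | perm_eq s (mtup S)].

(* Formal input X = (x_{k m}) in R^{d x t}: polynomial ring in d*t   *)
(* variables, variable x_{k m} has index mxvec_index k m.            *)
Section Attention.
Variables (R : realFieldType) (d t a : nat).

Definition Xvar (k : 'I_d) (m : 'I_t) : 'I_(d * t) := mxvec_index k m.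

Definition Xmx : 'M[{mpoly R[d * t]}]_(d, t) :=
  \matrix_(k, m) mpolyX R (mnm1 (Xvar k m)).

Definition Amat (Q K : 'M[R]_(a, d)) : 'M[R]_d := K^T *m Q.

Definition phiW (Q K : 'M[R]_(a, d)) (V : 'rV[R]_d) : 'rV[{mpoly R[d * t]}]_t :=
  map_mx (fun r => r%:MP) V *m Xmx
    *m (Xmx^T *m map_mx (fun r => r%:MP) (Amat Q K) *m Xmx).

Definition monoAb (A : mset 2 d) (b : 'I_d) (n j : 'I_t) : 'X_{1..d * t} :=
  mnm_add (foldr (fun u m => mnm_add (mnm1 (Xvar u n)) m) (@mnm0 _) (mtup A))
          (mnm1 (Xvar b j)).

Definition coef_c (Q K : 'M[R]_(a, d)) (V : 'rV[R]_d) (n j : 'I_t)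
    (A : mset 2 d) (b : 'I_d) : R :=
  mcoeff (monoAb A b n j) (phiW Q K V 0 j).

Definition coef_y (Q K : 'M[R]_(a, d)) (V : 'rV[R]_d) (n j : 'I_t)
    (A : mset 2 d) (b : 'I_d) : R :=
  coef_c Q K V n j A b / (#|Perm A|)%:R.

Definition Idx := {x : 'I_t * 'I_t * mset 2 d * 'I_d | x.1.1.1 != x.1.1.2}.

Definition mkIdx (n j : 'I_t) (hnj : n != j) (A : mset 2 d) (b : 'I_d) : Idx :=
  @exist _ (fun x : 'I_t * 'I_t * mset 2 d * 'I_d => x.1.1.1 != x.1.1.2)
    (n, j, A, b) hnj.

Definition mu (Q K : 'M[R]_(a, d)) (V : 'rV[R]_d) : Idx -> R :=
  fun i => let: (n, j, A, b) := sval i in coef_y Q K V n j A b.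

Definition ambient_eval (p : {mpoly R[#|{: Idx}|]}) (z : Idx -> R) : R :=
  p.@[fun i => z (enum_val i)].

Definition attention_variety (z : Idx -> R) : Prop :=
  forall p : {mpoly R[#|{: Idx}|]},
    (forall (Q K : 'M[R]_(a, d)) (V : 'rV[R]_d), ambient_eval p (mu Q K V) = 0) ->
    ambient_eval p z = 0.

Definition Ttil (z : Idx -> R) (n j : 'I_t) (hnj : n != j) (k1 k2 k3 : 'I_d) : R :=
  z (mkIdx hnj (mset2 k1 k2) k3).

Definition Mslice (z : Idx -> R) (n j : 'I_t) (hnj : n != j) (k3 : 'I_d) : 'M[R]_d :=
  \matrix_(k1, k2) Ttil z hnj k1 k2 k3.

Definition Delta (z : Idx -> R) (n j : 'I_t) (hnj : n != j)
    (r c : 3.-tuple 'I_d) (S : mset 3 d) : R :=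
  \sum_(s in Perm S)
     \det (\matrix_(p < 3, q < 3) Ttil z hnj (tnth r p) (tnth c q) (tnth s p)).
End Attention.

(* Main.v *)
Require Import Defs.
From HB Require Import structures.
From mathcomp Require Import all_boot all_order all_algebra.
From mathcomp Require Import mpoly.
From mathcomp Require Import ring.
From mathcomp Require Import fingroup perm.
Require Import Defs.
Import Order.TTheory GRing.Theory Num.Theory.
Local Open Scope ring_scope.
Set Implicit Arguments.
Unset Strict Implicit.

Definition monoX N (s : seq 'I_N) : 'X_{1..N} := \big[mnm_add/mnm0]_(x <- s) U_(x)%MM.

Lemma mono_count N (s : seq 'I_N) i : monoX s i = count_mem i s.
Proof.
rewrite /monoX mnm_sumE; elim: s => [|x s IH]; first by rewrite big_nil.
by rewrite big_cons IH mnm1E /= eq_sym.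
Qed.

Lemma mono_perm N (s1 s2 : seq 'I_N) : (monoX s1 == monoX s2) = perm_eq s1 s2.
Proof.
apply/eqP/idP.
  move=> H; apply/allP => x _; apply/eqP.
  by rewrite -!mono_count H.
move=> H; exact: perm_big.
Qed.

Lemma perm1 (T : eqType) (x y : T) : perm_eq [:: x] [:: y] = (x == y).
Proof.
apply/idP/eqP => [H|->//]; have := perm_mem H x; rewrite !inE eqxx.
by move=> /esym/eqP.
Qed.

Lemma perm2 (T : eqType) (k k1 u v : T) :
  perm_eq [:: k; k1] [:: u; v] = ((k == u) && (k1 == v)) || ((k == v) && (k1 == u)).
Proof.
have sw : perm_eq [:: u; v] [:: v; u] by rewrite (perm_catC [:: u] [:: v]).
apply/idP/idP.
  move=> H.
  have := perm_mem H k; rewrite !inE eqxx /= => /esym/orP[]/eqP Hk; subst k.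
    by move: H; rewrite perm_cons perm1 eqxx => ->.
  move: H; rewrite (permPr sw) perm_cons perm1 => ->; by rewrite eqxx orbT.
case/orP=> /andP[/eqP-> /eqP->] //.
by rewrite perm_sym.
Qed.

Lemma in_Perm2 d (u v : 'I_d) (s : 2.-tuple 'I_d) :
  (s \in Perm (mset2 u v)) = perm_eq s [:: u; v].
Proof.
rewrite inE /mset2 /msort /=.
by apply: permPr; rewrite perm_sort.
Qed.

Lemma Perm2E d (u v : 'I_d) :
  Perm (mset2 u v) = [set [tuple u; v]; [tuple v; u]].
Proof.
apply/setP => s; rewrite in_Perm2 in_set2.
case: s => [[|x [|y []]] Hs] //.
by rewrite perm2 -!val_eqE /= !eqseq_cons !andbT.
Qed.

Lemma card_Perm2 d (u v : 'I_d) : #|Perm (mset2 u v)| = (u != v).+1.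
Proof.
rewrite Perm2E cards2 -val_eqE /= eqseq_cons.
by case: (eqVneq u v) => [->|uv] //=; rewrite eqxx.
Qed.

Lemma Xvar_eq d t (k k' : 'I_d) (m m' : 'I_t) :
  (Xvar k m == Xvar k' m') = (k == k') && (m == m').
Proof.
apply/eqP/andP => [|[/eqP-> /eqP->]//].
by move/cast_ord_inj/enum_rank_inj => [-> ->].
Qed.

Lemma perm3 d t (n j m : 'I_t) (k k1 k2 u v b : 'I_d) : n != j ->
  perm_eq [:: Xvar k m; Xvar k1 m; Xvar k2 j] [:: Xvar u n; Xvar v n; Xvar b j]
  = [&& m == n, k2 == b & perm_eq [:: k; k1] [:: u; v]].
Proof.
move=> nj; apply/idP/idP.
- move=> H.
  have : Xvar k2 j \in [:: Xvar u n; Xvar v n; Xvar b j].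
    by rewrite -(perm_mem H) !inE eqxx !orbT.
  rewrite !inE !Xvar_eq (eq_sym j n) (negbTE nj) !andbF /= => /andP[/eqP e _]; subst k2.
  move: H; rewrite -[[:: Xvar k m; _; _]]/([:: _; _] ++ [:: Xvar b j]).
  rewrite -[[:: Xvar u n; _; _]]/([:: _; _] ++ [:: Xvar b j]) perm_cat2r => H.
  have : Xvar k m \in [:: Xvar u n; Xvar v n] by rewrite -(perm_mem H) inE eqxx.
  rewrite !inE !Xvar_eq => hm.
  have mn : m == n by case/orP: hm => /andP[].
  rewrite mn eqxx /=; move/eqP: mn => mn; subst m.
  apply: (@perm_map_inj _ _ (fun x => Xvar x n)) => //.
  by move=> x y /eqP; rewrite Xvar_eq eqxx andbT => /eqP.
- case/and3P => /eqP-> /eqP-> H.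
  rewrite -[[:: Xvar k n; _; _]]/([:: _; _] ++ [:: Xvar b j]).
  rewrite -[[:: Xvar u n; _; _]]/([:: _; _] ++ [:: Xvar b j]) perm_cat2r.
  exact: (perm_map (fun x => Xvar x n) H).
Qed.

Lemma foldr_monoX d t (n : 'I_t) (s : seq 'I_d) :
  foldr (fun u m => mnm_add (mnm1 (Xvar u n)) m) (@mnm0 _) s
  = monoX (map (fun x => Xvar x n) s).
Proof.
elim: s => [|x s IH] /=; first by rewrite /monoX big_nil.
by rewrite IH /monoX big_cons.
Qed.

Lemma monoAbE d t (u v b : 'I_d) (n j : 'I_t) L :
  (monoX L == monoAb (mset2 u v) b n j) = perm_eq L [:: Xvar u n; Xvar v n; Xvar b j].
Proof.
have -> : monoAb (mset2 u v) b n j =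
   monoX (map (fun x => Xvar x n) (sort (fun x y : 'I_d => (x <= y)%N) [:: u; v]) ++ [:: Xvar b j]).
  by rewrite /monoAb foldr_monoX /monoX big_cat big_seq1.
rewrite mono_perm; apply: permPr.
rewrite -[[:: Xvar u n; _; _]]/([:: _; _] ++ [:: Xvar b j]) perm_cat2r.
by rewrite -[[:: Xvar u n; _]]/(map (fun x => Xvar x n) [:: u; v]) perm_map // perm_sort.
Qed.

Lemma phiW_E (R : realFieldType) d t a (Q K : 'M[R]_(a, d)) V (j : 'I_t) :
  phiW t Q K V 0 j = \sum_(m < t) \sum_(k < d) \sum_(k2 < d) \sum_(k1 < d)
     (V 0 k * Amat Q K k1 k2)%:MP * 'X_[monoX [:: Xvar k m; Xvar k1 m; Xvar k2 j]].
Proof.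
rewrite /phiW mxE; apply: eq_bigr => m _.
rewrite !mxE big_distrl; apply: eq_bigr => k _.
rewrite !mxE big_distrr; apply: eq_bigr => k2 _.
rewrite !mxE big_distrl big_distrr; apply: eq_bigr => k1 _.
rewrite !mxE /monoX !big_cons big_nil !mpolyXD mpolyX0 mpolyCM.
rewrite /=; ring.
Qed.

Lemma sum_only (R : nmodType) N (x : 'I_N) (F : 'I_N -> R) :
  (forall i, i != x -> F i = 0) -> \sum_i F i = F x.
Proof.
by move=> H; rewrite (bigD1 x) //= big1 ?addr0 // => i /H.
Qed.

Lemma coef_c_E (R : realFieldType) d t a (Q K : 'M[R]_(a, d)) V (n j : 'I_t)
   (nj : n != j) (u v b : 'I_d) :
  coef_c Q K V n j (mset2 u v) b = \sum_(k < d) \sum_(k1 < d)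
     (perm_eq [:: k; k1] [:: u; v])%:R * (V 0 k * Amat Q K k1 b).
Proof.
rewrite /coef_c phiW_E raddf_sum (@sum_only _ _ n) => [|m mn].
  rewrite raddf_sum; apply: eq_bigr => k _; rewrite raddf_sum (@sum_only _ _ b) => [|k2 k2b].
    rewrite raddf_sum; apply: eq_bigr => k1 _.
    by rewrite /= mcoeffCM mcoeffX monoAbE perm3 // !eqxx /= mulrC.
  rewrite raddf_sum big1 // => k1 _.
  by rewrite /= mcoeffCM mcoeffX monoAbE perm3 // eqxx (negbTE k2b) /= mulr0.
rewrite !raddf_sum big1 // => k _; rewrite raddf_sum big1 // => k2 _.
rewrite raddf_sum big1 // => k1 _.
by rewrite /= mcoeffCM mcoeffX monoAbE perm3 // (negbTE mn) /= mulr0.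
Qed.

Lemma sum2_delta (R : comRingType) N (x y : 'I_N) (F : 'I_N -> 'I_N -> R) :
  \sum_k \sum_k1 ((k == x) && (k1 == y))%:R * F k k1 = F x y.
Proof.
rewrite (@sum_only _ _ x) => [|k kx]; last first.
  by rewrite big1 // => k1 _; rewrite (negbTE kx) mul0r.
rewrite (@sum_only _ _ y) => [|k1 k1y]; last by rewrite (negbTE k1y) andbF mul0r.
by rewrite !eqxx mul1r.
Qed.

Lemma coef_y_E (R : realFieldType) d t a (Q K : 'M[R]_(a, d)) V (n j : 'I_t)
   (nj : n != j) (u v b : 'I_d) :
  coef_y Q K V n j (mset2 u v) b = (V 0 u * Amat Q K v b + V 0 v * Amat Q K u b) / 2.
Proof.
rewrite /coef_y coef_c_E // card_Perm2.
under eq_bigr do under eq_bigr do rewrite perm2.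
case: (eqVneq u v) => [<-|uv] /=.
  under eq_bigr do under eq_bigr do rewrite orbb.
  rewrite (sum2_delta _ _ (fun k k1 => V 0 k * Amat Q K k1 b)).
  by rewrite divr1; field.
have E : forall k k1 : 'I_d, ((k == u) && (k1 == v) || (k == v) && (k1 == u))%:R
   = ((k == u) && (k1 == v))%:R + ((k == v) && (k1 == u))%:R :> R.
  move=> k k1; case: (eqVneq k u) => [->|ku]; rewrite ?(negbTE uv) ?(negbTE ku) /=.
    by case: (k1 == v); rewrite ?mulr0n ?addr0.
  by rewrite mulr0n add0r.
under eq_bigr do under eq_bigr do rewrite E mulrDl.
under eq_bigr do rewrite big_split /=.
rewrite big_split /= (sum2_delta _ _ (fun k k1 => V 0 k * Amat Q K k1 b)).
by rewrite (sum2_delta _ _ (fun k k1 => V 0 k * Amat Q K k1 b)).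
Qed.

Lemma det_rank2 (P : comRingType) (U : 'M[P]_(3,2)) (W : 'M[P]_(2,3)) :
  \det (U *m W) = 0.
Proof.
have E := mul_row_col U (0 : 'M_(3,1)) W (0 : 'M_(1,3)).
rewrite mul0mx addr0 in E.
rewrite -E det_mulmx [X in _ * X]big1 ?mulr0 // => q _.
rewrite (bigD1 ord_max) //=.
rewrite [col_mx W 0 _ _]mxE; case: splitP => [i' /= Hi|i' _].
  by have := ltn_ord i'; rewrite -Hi.
by rewrite mxE mul0r mulr0.
Qed.

Definition monoF d (h : {ffun 'I_3 -> 'I_d}) : 'X_{1..d} :=
  \big[mnm_add/mnm0]_(p < 3) U_(h p)%MM.

Lemma prodX_monoF (R : comRingType) d (h : {ffun 'I_3 -> 'I_d}) :
  \prod_(p < 3) ('X_(h p) : {mpoly R[d]}) = 'X_[monoF h].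
Proof.
rewrite /monoF; apply/esym.
exact: (big_morph (fun m => 'X_[m] : {mpoly R[d]}) (@mpolyXD _ _) (mpolyX0 _ _)).
Qed.

Section Delta0.
Variables (R : realFieldType) (d : nat) (f : 'I_d -> R) (g : 'I_d -> 'I_d -> R).
Variables (r c : 3.-tuple 'I_d).
Let T u v b := f u * g v b + f v * g u b.
Let Mx : 'M[{mpoly R[d]}]_3 :=
  \matrix_(p, q) \sum_k 'X_k * (T (tnth r p) (tnth c q) k)%:MP.
Let Nf (h : {ffun 'I_3 -> 'I_d}) : 'M[R]_3 :=
  \matrix_(p, q) T (tnth r p) (tnth c q) (h p).

Lemma detMx0 : \det Mx = 0.
Proof.
pose G x := \sum_k ('X_k : {mpoly R[d]}) * (g x k)%:MP.
have -> : Mx = (row_mx (\col_p (f (tnth r p))%:MP) (\col_p G (tnth r p))) *m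
     (col_mx (\row_q G (tnth c q)) (\row_q (f (tnth c q))%:MP)).
  rewrite mul_row_col; apply/matrixP => p q; rewrite !mxE !big_ord1 !mxE /G.
  rewrite mulr_sumr mulr_suml -big_split; apply: eq_bigr => k _ /=.
  rewrite /T mpolyCD !mpolyCM; ring.
exact: det_rank2.
Qed.

Lemma detMx_expand : \det Mx =
  \sum_(h : {ffun 'I_3 -> 'I_d}) 'X_[monoF h] * (\det (Nf h))%:MP.
Proof.
rewrite /(\det Mx).
have E : forall s : 'S_3, \prod_p Mx p (s p) = \sum_(h : {ffun 'I_3 -> 'I_d})
    \prod_p ('X_(h p) * (T (tnth r p) (tnth c (s p)) (h p))%:MP).
  move=> s; rewrite (eq_bigr (fun p => \sum_k 'X_k * (T (tnth r p) (tnth c (s p)) k)%:MP)).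
    by rewrite bigA_distr_bigA.
  by move=> p _; rewrite mxE.
under eq_bigr => s _ do rewrite E big_distrr.
rewrite exchange_big /=; apply: eq_bigr => h _.
rewrite /(\det (Nf h)) raddf_sum big_distrr /=; apply: eq_bigr => s _.
rewrite big_split /= prodX_monoF rmorphM rmorph_sign rmorph_prod /=.
rewrite mulrCA; congr (_ * (_ * _)); apply: eq_bigr => p _; by rewrite mxE.
Qed.

Lemma monoX_tuple (h : {ffun 'I_3 -> 'I_d}) : monoX [tuple h p | p < 3] = monoF h.
Proof. by rewrite /monoX big_tuple; apply: eq_bigr => p _; rewrite tnth_mktuple. Qed.

Lemma delta_coef (S : mset 3 d) :
  \sum_(s in Perm S) \det (\matrix_(p, q) T (tnth r p) (tnth c q) (tnth s p)) = 0.
Proof.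
have H0 : mcoeff (monoX (mtup S)) (\det Mx) = 0 by rewrite detMx0 mcoeff0.
rewrite detMx_expand raddf_sum /= in H0.
rewrite -[RHS]H0 big_mkcond /=.
rewrite (reindex (fun h : {ffun 'I_3 -> 'I_d} => [tuple h p | p < 3])) /=; last first.
  apply: onW_bij; exists (fun s : 3.-tuple 'I_d => [ffun p => tnth s p]) => [h | s].
    by apply/ffunP => p; rewrite ffunE tnth_mktuple.
  by apply: eq_from_tnth => p; rewrite tnth_mktuple ffunE.
apply: eq_bigr => h _.
rewrite mulrC mcoeffCM mcoeffX inE -mono_perm monoX_tuple.
case: (monoF h == monoX S); rewrite ?mulr1 ?mulr0 //.
by congr (\det _); apply/matrixP => p q; rewrite !mxE tnth_mktuple.
Qed.
End Delta0.

Lemma Ttil_mu (R : realFieldType) d t a (Q K : 'M[R]_(a, d)) V (n j : 'I_t)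
   (hnj : n != j) (u v b : 'I_d) :
  Ttil (mu Q K V) hnj u v b = (V 0 u * Amat Q K v b + V 0 v * Amat Q K u b) / 2.
Proof. by rewrite /Ttil /mu /=; exact: coef_y_E. Qed.

Lemma part2 (R : realFieldType) d t a (Q K : 'M[R]_(a, d)) V (n j : 'I_t)
   (hnj : n != j) (lambda : 'I_d -> R) :
  (\rank ((\sum_(k < d) lambda k *: Mslice (mu Q K V) hnj k)%R) <= 2)%N.
Proof.
pose w : 'rV[R]_d := \row_u \sum_k lambda k * Amat Q K u k.
have -> : \sum_(k < d) lambda k *: Mslice (mu Q K V) hnj k =
   2^-1 *: (row_mx V^T w^T *m col_mx w V).
  apply/matrixP => u v; rewrite summxE mxE mul_row_col !mxE !big_ord1 !mxE.
  under eq_bigr do rewrite !mxE Ttil_mu.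
  rewrite mulr_sumr mulr_suml -big_split /= mulr_sumr; apply: eq_bigr => k _.
  by field.
apply: leq_trans (mxrank_scale _ _) _.
apply: leq_trans (mxrankM_maxl _ _) _.
exact: rank_leq_col.
Qed.

Lemma part3_mu (R : realFieldType) d t a (Q K : 'M[R]_(a, d)) V (n j : 'I_t)
   (hnj : n != j) (r c : 3.-tuple 'I_d) (S : mset 3 d) :
  Delta (mu Q K V) hnj r c S = 0.
Proof.
rewrite /Delta -[RHS](delta_coef (fun u => V 0 u) (fun v b => Amat Q K v b / 2) r c S).
apply: eq_bigr => s _; congr (\det _); apply/matrixP => p q.
by rewrite !mxE Ttil_mu /Amat !mxE; field.
Qed.

Lemma ambient_Delta (R : realFieldType) d t (n j : 'I_t)
   (hnj : n != j) (r c : 3.-tuple 'I_d) (S : mset 3 d) :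
  exists pol, forall z : Idx d t -> R, ambient_eval pol z = Delta z hnj r c S.
Proof.
pose Xi (u v b : 'I_d) : {mpoly R[#|{: Idx d t}|]} :=
  'X_(enum_rank (mkIdx hnj (mset2 u v) b)).
exists (\sum_(s in Perm S) \det (\matrix_(p, q) Xi (tnth r p) (tnth c q) (tnth s p))).
move=> z; rewrite /ambient_eval raddf_sum /Delta; apply: eq_bigr => s _.
rewrite /= -det_map_mx; congr (\det _); apply/matrixP => p q.
by rewrite !mxE /Xi /= mevalXU enum_rankK.
Qed.

Theorem mainTheorem9 (R : realFieldType) (d t a : nat) (ht : (2 <= t)%N)
    (n j : 'I_t) (hnj : n != j) :
  (* (1) *)
  (forall (Q K : 'M[R]_(a, d)) (V : 'rV[R]_d) (k3 : 'I_d) (n' : 'I_t) (hn'j : n' != j),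
     Mslice (mu Q K V) hnj k3 = Mslice (mu Q K V) hn'j k3) /\
  (* (2) *)
  (forall (Q K : 'M[R]_(a, d)) (V : 'rV[R]_d) (lambda : 'I_d -> R),
     (\rank ((\sum_(k < d) lambda k *: Mslice (mu Q K V) hnj k)%R) <= 2)%N) /\
  (* (3) *)
  (forall (r c : 3.-tuple 'I_d) (S : mset 3 d),
     uniq r -> uniq c ->
     forall z : Idx d t -> R, attention_variety a z -> Delta z hnj r c S = 0).
Proof.
split.
  move=> Q K V k3 n' hn'j; apply/matrixP => u v; by rewrite !mxE !Ttil_mu.
split; first by move=> Q K V lambda; exact: part2.
move=> r c S _ _ z Hz.
have [pol Hpol] := ambient_Delta R hnj r c S.
rewrite -Hpol; apply: Hz => Q K V.
by rewrite Hpol part3_mu.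
Qed.
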